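(* Let $0\le z<t\le d\le n$ and consider any $((t,n;z))_q$ QSS scheme whose secret consists of $m$ qudits. Then $$\mathrm{CC}_n(d)\geq\frac{d\,m}{d-z}.$$
   Context: A QSS scheme on $n$ parties is an encoding of a quantum secret into $n$ shares, share $j$ given to party $j\in[n]$. A set $P\subseteq[n]$ is authorized if the secret can be recovered from the shares of the parties in $P$, and unauthorized if those shares contain no information about the secret. A $((t,n;z))_q$ QSS scheme is one in which every set of at least $t$ parties is authorized, every set of at most $z$ parties is unauthorized, and the secret consists of $m$ qudits and the shares of qudits, all of dimension $q$. For an authorized set $A$, a fixed (a priori) portion of each share of a party in $A$ is sent to a combiner, and $\mathrm{CC}_n(A)=\sum_{j\in A}h_{j,A}$ with $h_{j,A}$ the number of qudits sent by party $j$. For $t\le d\le n$, $\mathrm{CC}_n(d)=\max_{A\subseteq[n],|A|=d}\mathrm{CC}_n(A)$. *)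

(* Defs.v *)
From mathcomp Require Import all_boot all_algebra.
From mathcomp Require Import reals complex.
Set Implicit Arguments. Unset Strict Implicit. Unset Printing Implicit Defensive.
Import GRing.Theory Num.Theory.
Local Open Scope ring_scope.

Section Quantum.
Variable C : numClosedFieldType.

(* A linear operator from the space with orthonormal basis I to the space
   with orthonormal basis J, as its matrix: entry (j, i). *)
Definition Op (I J : finType) := J -> I -> C.

Definition mulop (I J K : finType) (A : Op J K) (B : Op I J) : Op I K :=
  fun k i => \sum_(j : J) A k j * B j i.

Definition adjop (I J : finType) (A : Op I J) : Op J I :=
  fun i j => (A j i)^*.

Definition idop (I : finType) : Op I I := fun i i' => (i == i')%:R.

Definition is_density (I : finType) (rho : Op I I) : Prop :=
  [/\ forall i j, rho j i = (rho i j)^*,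
      forall v : I -> C, 0 <= \sum_(i : I) \sum_(j : I) (v i)^* * rho i j * v j
    & \sum_(i : I) rho i i = 1].

(* quantum channels (CPTP maps) given by a finite list of Kraus operators *)
Definition is_channel (I J : finType) (ks : seq (Op I J)) : Prop :=
  forall i i', \sum_(K <- ks) mulop (adjop K) K i i' = idop i i'.

Definition apply_ch (I J : finType) (ks : seq (Op I J)) (rho : Op I I) : Op J J :=
  fun j j' => \sum_(K <- ks) mulop (mulop K rho) (adjop K) j j'.

End Quantum.

Section QSS.
Variables (q : nat) (n : nat) (s : 'I_n -> nat).

(* qudit positions of the shares: (party j, k-th qudit of share j) *)
Definition Pos := {j : 'I_n & 'I_(s j)}.

(* computational basis labels of the full system of shares *)
Definition ShareCfg := {ffun Pos -> 'I_q}.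

Definition CfgOn (S : {set Pos}) := {ffun {p : Pos | p \in S} -> 'I_q}.

Definition restr (S : {set Pos}) (x : ShareCfg) : CfgOn S :=
  [ffun p => x (val p)].
Arguments restr S x : clear implicits.

Definition posOf (P : {set 'I_n}) : {set Pos} := [set p : Pos | tag p \in P].

Variable C : numClosedFieldType.

Definition ptrace (S : {set Pos}) (rho : Op C ShareCfg ShareCfg) :
    Op C (CfgOn S) (CfgOn S) :=
  fun a b => \sum_(x : ShareCfg | restr S x == a)
             \sum_(y : ShareCfg | (restr S y == b) &&
                                   [forall p, (p \notin S) ==> (x p == y p)])
               rho x y.
Arguments ptrace S rho : clear implicits.

Definition SecCfg (m : nat) := {ffun 'I_m -> 'I_q}.

Variable m : nat.

Definition recoverable_from (E : seq (Op C (SecCfg m) ShareCfg)) (S : {set Pos}) :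
    Prop :=
  exists Rc : seq (Op C (CfgOn S) (SecCfg m)),
    is_channel Rc /\
    forall rho, is_density rho ->
      forall a b, apply_ch Rc (ptrace S (apply_ch E rho)) a b = rho a b.

Definition authorized (E : seq (Op C (SecCfg m) ShareCfg)) (P : {set 'I_n}) :=
  recoverable_from E (posOf P).

Definition unauthorized (E : seq (Op C (SecCfg m) ShareCfg)) (P : {set 'I_n}) :=
  forall rho sigma, is_density rho -> is_density sigma ->
    forall a b, ptrace (posOf P) (apply_ch E rho) a b
                = ptrace (posOf P) (apply_ch E sigma) a b.

Definition is_QSS (t z : nat) (E : seq (Op C (SecCfg m) ShareCfg)) : Prop :=
  [/\ is_channel E,
      forall P : {set 'I_n}, (t <= #|P|)%N -> authorized E P
    & forall P : {set 'I_n}, (#|P| <= z)%N -> unauthorized E P].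

End QSS.

(* Main.v *)
Require Import Defs.
From mathcomp Require Import all_boot all_algebra.
From mathcomp Require Import reals complex.
From mathcomp Require Import zify ring.
Set Implicit Arguments. Unset Strict Implicit. Unset Printing Implicit Defensive.
Import GRing.Theory Num.Theory.


Lemma average (n : nat) (s : 'I_n -> nat) (A : {set 'I_n}) (S : {set Pos s}) (z m : nat) :
  S \subset posOf s A -> z < #|A| ->
  (forall Zs : {set 'I_n}, Zs \subset A -> #|Zs| = z -> m <= #|S :\: posOf s Zs|) ->
  #|A| * m <= (#|A| - z) * #|S|.
Proof.
move=> SA zA hyp.
set F := [set Zs : {set 'I_n} | Zs \subset A & #|Zs| == z].
have cF : #|F| = 'C(#|A|, z) by rewrite cards_draws.
have sum1 : #|F| * m <= \sum_(Zs in F) #|S :\: posOf s Zs|.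
  rewrite -sum_nat_const; apply: leq_sum => Zs; rewrite inE => /andP[h1 /eqP h2].
  exact: hyp.
have sum2 : \sum_(Zs in F) #|S :\: posOf s Zs| = #|S| * 'C(#|A|.-1, z).
  transitivity (\sum_(Zs in F) \sum_(p in S) (tag p \notin Zs : nat)).
    apply: eq_bigr => Zs _; rewrite -sum1_card big_mkcond [RHS]big_mkcond /=.
    apply: eq_bigr => p _; rewrite in_setD /posOf inE.
    by case: (p \in S); case: (tag p \in Zs).
  rewrite exchange_big -sum_nat_const; apply: eq_bigr => p hp.
  have jA : tag p \in A by move/subsetP: SA => /(_ p hp); rewrite inE.
  transitivity #|[set Zs : {set 'I_n} | Zs \subset A :\ tag p & #|Zs| == z]|.
    rewrite -sum1_card big_mkcond [RHS]big_mkcond /=; apply: eq_bigr => Zs _.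
    rewrite !inE subsetD1.
    by case: (Zs \subset A); case: (tag p \in Zs); case: (#|Zs| == z).
  by rewrite cards_draws (cardsD1 (tag p) A) jA.
have C0 : 0 < 'C(#|A|.-1, z) by rewrite bin_gt0; lia.
have e : 'C(#|A|.-1, z) * (#|A| * m) = (#|A| - z) * (#|F| * m).
  by rewrite cF mulnA [_ * #|A|]mulnC mul_bin_down mulnA.
rewrite -(leq_pmul2l C0) e [_ * ((_ - _) * _)]mulnCA leq_mul2l.
by apply/orP; right; rewrite [_ * #|S|]mulnC -sum2.
Qed.

Local Open Scope ring_scope.


Section LA.
Variable C : numClosedFieldType.

Lemma sum_enum (I : finType) (F : I -> C) :
  \sum_(i : I) F i = \sum_(k < #|I|) F (enum_val k).
Proof. by rewrite -(big_enum_val F); apply: eq_bigl => i; rewrite inE. Qed.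

Definition mxf (I J : finType) (f : I -> J -> C) : 'M[C]_(#|I|, #|J|) :=
  \matrix_(i, j) f (enum_val i) (enum_val j).

Definition rk (I J : finType) (f : I -> J -> C) := \rank (mxf f).

Lemma rk_ext (I J : finType) (f g : I -> J -> C) :
  (forall i j, f i j = g i j) -> rk f = rk g.
Proof. by move=> e; rewrite /rk /mxf; congr (\rank _); apply/matrixP=> i j; rewrite !mxE e. Qed.

Lemma mxf_mul (I J K : finType) (f : I -> J -> C) (g : J -> K -> C) :
  mxf (fun i k => \sum_j f i j * g j k) = mxf f *m mxf g.
Proof.
apply/matrixP=> i k; rewrite !mxE sum_enum; apply: eq_bigr => j _.
by rewrite !mxE.
Qed.

Lemma rk_mul_l (I J K : finType) (f : I -> J -> C) (g : J -> K -> C) :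
  (rk (fun i k => (\sum_j f i j * g j k)%R) <= rk f)%N.
Proof. by rewrite /rk mxf_mul; apply: mxrankM_maxl. Qed.

Lemma rk_mul_r (I J K : finType) (f : I -> J -> C) (g : J -> K -> C) :
  (rk (fun i k => (\sum_j f i j * g j k)%R) <= rk g)%N.
Proof. by rewrite /rk mxf_mul; apply: mxrankM_maxr. Qed.

Lemma rk_le_col (I J : finType) (f : I -> J -> C) : (rk f <= #|J|)%N.
Proof. exact: rank_leq_col. Qed.

Lemma rk_id (I : finType) : rk (fun i j : I => (i == j)%:R) = #|I|.
Proof.
rewrite /rk (_ : mxf _ = 1%:M) ?mxrank1 //; apply/matrixP=> i j.
by rewrite !mxE (inj_eq enum_val_inj).
Qed.

Lemma rk_scale (I J : finType) (c : C) (f : I -> J -> C) :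
  c != 0 -> rk (fun i j => c * f i j) = rk f.
Proof.
move=> c0; rewrite /rk (_ : mxf _ = c *: mxf f) ?mxrank_scale_nz //.
by apply/matrixP=> i j; rewrite !mxE.
Qed.

Lemma rk_eq0 (I J : finType) (f : I -> J -> C) : rk f = 0%N -> forall i j, f i j = 0.
Proof.
move=> /eqP; rewrite mxrank_eq0 => /eqP /matrixP h i j.
by have := h (enum_rank i) (enum_rank j); rewrite !mxE !enum_rankK.
Qed.

Lemma rk_factor (I J : finType) (f : I -> J -> C) :
  exists g : I -> 'I_(rk f) -> C, exists h : 'I_(rk f) -> J -> C,
    forall i j, f i j = \sum_k g i k * h k j.
Proof.
exists (fun i k => col_base (mxf f) (enum_rank i) k).
exists (fun k j => row_base (mxf f) k (enum_rank j)).
move=> i j; have := mulmx_base (mxf f) => /matrixP /(_ (enum_rank i) (enum_rank j)).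
by rewrite !mxE !enum_rankK => <-.
Qed.

Lemma rk_inv (U V : finType) (w : U -> V -> C) :
  exists P : 'I_(rk w) -> U -> C, exists Q : V -> 'I_(rk w) -> C,
    forall k k', \sum_u \sum_v P k u * w u v * Q v k' = (k == k')%:R.
Proof.
set A := mxf w; set r := rk w.
pose P' : 'M_(r, #|U|) := pid_mx r *m invmx (col_ebase A).
pose Q' : 'M_(#|V|, r) := invmx (row_ebase A) *m pid_mx r.
have eq1 : P' *m A *m Q' = 1%:M.
  rewrite -[X in P' *m X *m Q'](mulmx_ebase A) /P' /Q' !mulmxA mulmxKV ?col_ebase_unit //.
  rewrite mulmxK ?row_ebase_unit // !mul_pid_mx (_ : \rank A = r) // minnn.
  have rU : (r <= #|U|)%N by apply: rank_leq_row.
  have rV : (r <= #|V|)%N by apply: rank_leq_col.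
  by rewrite (minn_idPr rU) minnn (minn_idPr rV) pid_mx_1.
exists (fun k u => P' k (enum_rank u)), (fun v k => Q' (enum_rank v) k).
move=> k k'; move/matrixP: eq1 => /(_ k k'); rewrite !mxE => <-.
rewrite exchange_big sum_enum; apply: eq_bigr => j _; rewrite !mxE big_distrl sum_enum.
apply: eq_bigr => i _; rewrite !mxE !enum_valK; by [].
Qed.


Lemma rank_gram m n (A : 'M[C]_(m, n)) :
  \rank (A *m (map_mx Num.conj A)^T) = \rank A.
Proof.
apply/eqP; rewrite eqn_leq mxrankM_maxl /=.
set B := (map_mx Num.conj A)^T.
set K := kermx (A *m B).
have KAB : K *m (A *m B) = 0 by rewrite mulmx_ker.
have M0 : K *m A = 0.
  set M := K *m A.
  have MM : M *m (map_mx Num.conj M)^T = 0.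
    by rewrite /M map_mxM trmx_mul -/B mulmxA -(mulmxA K) KAB mul0mx.
  have Mij : forall i j, M i j = 0.
    move=> i j; apply/eqP; rewrite -mul_conjC_eq0; apply/eqP.
    have e : (M *m (map_mx Num.conj M)^T) i i = \sum_k M i k * (M i k)^*.
      by rewrite !mxE; apply: eq_bigr => k _; rewrite !mxE.
    move: e; rewrite MM mxE => /esym /psumr_eq0P; apply => // k _.
    exact: mul_conjC_ge0.
  by apply/matrixP => i j; rewrite Mij mxE.
have : (K <= kermx A)%MS by apply/sub_kermxP.
move/mxrankS; rewrite !mxrank_ker.
have := rank_leq_row A; have := rank_leq_row (A *m B).
move=> h1 h2 h3; lia.
Qed.

Lemma rk_gram (I J : finType) (f : I -> J -> C) :
  rk (fun i i' => (\sum_j f i j * (f i' j)^* )%R) = rk f.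
Proof.
rewrite /rk -[RHS]rank_gram; congr (\rank _); apply/matrixP => i k.
rewrite !mxE sum_enum; apply: eq_bigr => j _; by rewrite !mxE.
Qed.


Lemma sum_pair (I J : finType) (F : I * J -> C) :
  \sum_p F p = \sum_i \sum_j F (i, j).
Proof. by rewrite pair_bigA; apply: eq_bigr => -[]. Qed.

Lemma sum_delta (T : finType) (t0 : T) (F : T -> C) :
  \sum_t (t0 == t)%:R * F t = F t0.
Proof.
rewrite (bigD1 t0) //= eqxx mul1r big1 ?addr0 // => t.
by rewrite eq_sym => /negbTE ->; rewrite mul0r.
Qed.

Lemma rk_split (X Y Z : finType) (psi : X -> Y -> Z -> C) :
  (rk (fun (z : Z) (yx : Y * X) => psi yx.2 yx.1 z)
    <= rk (fun (x : X) (zy : Z * Y) => psi x zy.2 zy.1) * #|Y|)%N.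
Proof.
set G := (fun (x : X) (zy : Z * Y) => psi x zy.2 zy.1).
have [g [h gh]] := rk_factor G.
have -> : rk (fun (z : Z) (yx : Y * X) => psi yx.2 yx.1 z) =
  rk (fun z (yx : Y * X) => \sum_(ky : 'I_(rk G) * Y)
        h ky.1 (z, ky.2) * ((ky.2 == yx.1)%:R * g yx.2 ky.1)).
  apply: rk_ext => z [y x] /=; rewrite sum_pair /=.
  have -> : psi x y z = G x (z, y) by [].
  rewrite gh; apply: eq_bigr => k _.
  rewrite (eq_bigr (fun y' => (y == y')%:R * (h k (z, y') * g x k))).
    by rewrite sum_delta mulrC.
  by move=> y' _; rewrite mulrCA eq_sym.
apply: leq_trans (rk_mul_l _ _) _.
by apply: leq_trans (rk_le_col _) _; rewrite card_prod card_ord.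
Qed.

Lemma rk_blockdiag_ge (Ar U J : finType) (f : Ar * U -> J -> C) (w : U -> U -> C) :
  (forall p p', \sum_j f p j * (f p' j)^* = (p.1 == p'.1)%:R * w p.2 p'.2) ->
  (#|Ar| * rk w <= rk f)%N.
Proof.
move=> H; rewrite -[rk f]rk_gram.
rewrite (@rk_ext _ _ _ (fun p p' => (p.1 == p'.1)%:R * w p.2 p'.2) H).
have [P [Q PQ]] := rk_inv w.
set r := rk w in P Q PQ *.
set BD := (fun p p' : Ar * U => _).
pose BP (p : Ar * 'I_r) (p' : Ar * U) := (p.1 == p'.1)%:R * P p.2 p'.2.
pose BQ (p : Ar * U) (p' : Ar * 'I_r) := (p.1 == p'.1)%:R * Q p.2 p'.2.
have -> : (#|Ar| * r = rk (fun p p' : Ar * 'I_r => (p == p')%:R))%N.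
  by rewrite rk_id card_prod card_ord.
have -> : rk (fun p p' : Ar * 'I_r => (p == p')%:R) =
   rk (fun p p'' => \sum_p' BP p p' * (\sum_p3 BD p' p3 * BQ p3 p'')).
  apply: rk_ext => -[a k] [a' k'] /=.
  rewrite sum_pair /= (eq_bigr (fun b => (a == b)%:R * 
     \sum_u (P k u * \sum_p3 BD (b, u) p3 * BQ p3 (a', k')))); last first.
    move=> b _; rewrite big_distrr; apply: eq_bigr => u _ /=.
    by rewrite /BP /= mulrA.
  rewrite sum_delta.
  have inner : forall u, \sum_p3 BD (a, u) p3 * BQ p3 (a', k') =
      (a == a')%:R * \sum_v w u v * Q v k'.
    move=> u; rewrite sum_pair /= (eq_bigr (fun c => (a == c)%:R *
       ((c == a')%:R * \sum_v w u v * Q v k'))); first by rewrite sum_delta.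
    move=> c _; rewrite !big_distrr /=; apply: eq_bigr => v _; rewrite /BD /BQ /=.
    ring.
  under eq_bigr => u _ do rewrite inner.
  transitivity ((a == a')%:R * \sum_u \sum_v P k u * w u v * Q v k'); last first.
    rewrite [LHS]big_distrr; apply: eq_bigr => u _ /=; rewrite [RHS]mulrCA; congr (_ * _).
    by rewrite [RHS]big_distrr; apply: eq_bigr => v _ /=; rewrite mulrA.
  by rewrite PQ xpair_eqE -natrM mulnb.
apply: leq_trans (rk_mul_r _ _) _.
exact: rk_mul_l.
Qed.


Lemma nat_fin (D r l k : nat) : (D * r <= l * k)%N -> (D * l <= r * k)%N ->
  (0 < r)%N -> (0 < l)%N -> (D <= k)%N.
Proof.
move=> h1 h2 r0 l0; rewrite leqNgt; apply/negP => kD.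
have a1 : (l * k < l * D)%N by rewrite ltn_pmul2l.
have a2 : (r * k < r * D)%N by rewrite ltn_pmul2l.
have : (r < l)%N by rewrite -(ltn_pmul2l (leq_ltn_trans (leq0n _) kD)) mulnC [(D * l)%N]mulnC; lia.
have : (l < r)%N by rewrite -(ltn_pmul2l (leq_ltn_trans (leq0n _) kD)); lia.
lia.
Qed.

Theorem abstract_bound (Ar U1 U2 Env : finType) (psi : Ar -> U1 -> U2 -> Env -> C)
  (w : U1 -> U1 -> C) (l : Env -> Env -> C) :
  (forall a b u v, \sum_y \sum_e psi a u y e * (psi b v y e)^* = (a == b)%:R * w u v) ->
  (forall a b e f, \sum_u \sum_y psi a u y e * (psi b u y f)^* = (a == b)%:R * l e f) ->
  (exists a u y e, psi a u y e != 0) ->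
  (#|Ar| <= #|U2|)%N.
Proof.
move=> H1 H2 [a0 [u0 [y0 [e0 nz]]]].
have hA1 : (#|Ar| * rk w <= rk (fun (p : Ar * U1) (q : U2 * Env) => psi p.1 p.2 q.1 q.2))%N.
  by apply: rk_blockdiag_ge => -[a u] [b v] /=; rewrite sum_pair; exact: H1.
have hB1 : (#|Ar| * rk l <= rk (fun (p : Ar * Env) (q : U2 * U1) => psi p.1 q.2 q.1 p.2))%N.
  by apply: rk_blockdiag_ge => -[a e] [b f] /=; rewrite sum_pair exchange_big; exact: H2.
have D0 : (#|Ar|%:R : C) != 0 by rewrite pnatr_eq0 -lt0n; apply/card_gt0P; exists a0.
have rkE : rk (fun (x : Env) (zy : (Ar * U1) * U2) => psi zy.1.1 zy.1.2 zy.2 x) = rk l.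
  rewrite -rk_gram (@rk_ext _ _ _ (fun e f => #|Ar|%:R * l e f)) ?rk_scale //.
  move=> e f; rewrite sum_pair sum_pair /=.
  under eq_bigr => a _ do rewrite H2 eqxx mul1r.
  by rewrite sumr_const mulr_natl.
have rk1 : rk (fun (x : U1) (zy : (Ar * Env) * U2) => psi zy.1.1 x zy.2 zy.1.2) = rk w.
  rewrite -rk_gram (@rk_ext _ _ _ (fun u v => #|Ar|%:R * w u v)) ?rk_scale //.
  move=> u v; rewrite sum_pair sum_pair /=.
  under eq_bigr => a _ do rewrite exchange_big H1 eqxx mul1r.
  by rewrite sumr_const mulr_natl.
have hA2 := rk_split (fun (x : Env) (y : U2) (z : Ar * U1) => psi z.1 z.2 y x).
have hB2 := rk_split (fun (x : U1) (y : U2) (z : Ar * Env) => psi z.1 x y z.2).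
rewrite /= rkE in hA2; rewrite /= rk1 in hB2.
have r0 : (0 < rk w)%N.
  rewrite lt0n; apply/negP => /eqP z0; move: nz; rewrite -rk1 in z0.
  by rewrite (rk_eq0 z0 u0 ((a0, e0), y0)) eqxx.
have l0 : (0 < rk l)%N.
  rewrite lt0n; apply/negP => /eqP z0; move: nz; rewrite -rkE in z0.
  by rewrite (rk_eq0 z0 e0 ((a0, u0), y0)) eqxx.
apply: (nat_fin _ _ r0 l0).
  exact: leq_trans hA1 hA2.
exact: leq_trans hB1 hB2.
Qed.

End LA.


Section Cfg.
Variables (q n : nat) (s : 'I_n -> nat) (d0 : 'I_q).
Variable C : numClosedFieldType.
Local Notation Pos := (Pos s).
Local Notation X := (ShareCfg q s).
Local Notation CfgOn := (@CfgOn q n s).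
Local Notation restr := (@restr q n s).

Definition extc (P : {set Pos}) (u : CfgOn P) : X :=
  [ffun p => if insub p is Some p' then u p' else d0].

Definition mixc (P : {set Pos}) (x y : X) : X :=
  [ffun p => if p \in P then x p else y p].

Lemma mixcE (P : {set Pos}) (x y : X) p : mixc P x y p = if p \in P then x p else y p.
Proof. by rewrite ffunE. Qed.

Definition agree (P : {set Pos}) (x y : X) :=
  [forall p, (p \notin P) ==> (x p == y p)].

Lemma extcE (P : {set Pos}) (u : CfgOn P) (p : Pos) (h : p \in P) :
  extc u p = u (exist _ p h).
Proof. by rewrite ffunE insubT. Qed.

Lemma restr_extc P (u : CfgOn P) : restr P (extc u) = u.
Proof.
apply/ffunP => p'; rewrite ffunE (extcE _ (valP p')); congr (u _).
by apply: val_inj.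
Qed.

Lemma restrE (P : {set Pos}) (x : X) (p : Pos) (h : p \in P) :
  restr P x (exist _ p h) = x p.
Proof. by rewrite ffunE. Qed.

Lemma extc_restr (P : {set Pos}) (x : X) (p : Pos) : p \in P -> extc (restr P x) p = x p.
Proof. by move=> h; rewrite (extcE _ h) restrE. Qed.

Lemma agree_refl (P : {set Pos}) (x : X) : agree P x x.
Proof. by apply/forallP => p; rewrite eqxx implybT. Qed.

Lemma sum_param (P : {set Pos}) (W : finType) (g : CfgOn P -> W -> X)
  (gw : X -> W) (g_restr : forall u w, restr P (g u w) = u)
  (g_agree : forall u w u' w', agree P (g u w) (g u' w') = (w == w'))
  (g_surj : forall x, g (restr P x) (gw x) = x) (F : X -> C) :
  \sum_x F x = \sum_u \sum_w F (g u w).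
Proof.
have gwK : forall u w, gw (g u w) = w.
  move=> u w; apply/eqP; rewrite -(g_agree u _ u w).
  have := g_surj (g u w); rewrite g_restr => ->; exact: agree_refl.
rewrite [RHS]pair_bigA /= (reindex (fun p : CfgOn P * W => g p.1 p.2)) //.
apply: onW_bij; exists (fun x => (restr P x, gw x)) => [[u w]|x] /=.
  by rewrite g_restr gwK.
exact: g_surj.
Qed.

Lemma ptrace_param (P : {set Pos}) (W : finType) (g : CfgOn P -> W -> X)
  (gw : X -> W) (g_restr : forall u w, restr P (g u w) = u)
  (g_agree : forall u w u' w', agree P (g u w) (g u' w') = (w == w'))
  (g_surj : forall x, g (restr P x) (gw x) = x) (rho : Op C X X) u v :
  ptrace (S := P) rho u v = \sum_w rho (g u w) (g v w).
Proof.
rewrite /ptrace big_mkcond (sum_param g_restr g_agree g_surj) (bigD1 u) //=.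
rewrite [X in _ + X]big1 ?addr0; last first.
  by move=> u1 ne; apply: big1 => w _; rewrite g_restr (negbTE ne).
apply: eq_bigr => w _; rewrite g_restr eqxx big_mkcond (sum_param g_restr g_agree g_surj).
rewrite (bigD1 v) //= [X in _ + X]big1 ?addr0; last first.
  by move=> v1 ne; apply: big1 => w' _; rewrite g_restr (negbTE ne).
rewrite (bigD1 w) //= [X in _ + X]big1 ?addr0; last first.
  move=> w' ne; rewrite g_restr eqxx /=.
  by have := g_agree u w v w'; rewrite /agree => ->; rewrite eq_sym (negbTE ne).
by rewrite g_restr eqxx /=; have := g_agree u w v w; rewrite /agree => ->; rewrite eqxx.
Qed.


Definition jn (P : {set Pos}) (u : CfgOn P) (w : CfgOn (~: P)) : X :=
  mixc P (extc u) (extc w).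

Lemma jn_restr P u w : restr P (@jn P u w) = u.
Proof.
apply/ffunP => -[p hp]; rewrite restrE /jn mixcE hp (extcE _ hp); by [].
Qed.

Lemma jn_agree P u w u' w' : agree P (@jn P u w) (@jn P u' w') = (w == w').
Proof.
apply/forallP/eqP => [h|<-].
  apply/ffunP => -[p hp]; have pn : p \notin P by rewrite -in_setC.
  move/implyP: (h p) => /(_ pn); rewrite /jn !mixcE (negbTE pn) !(extcE _ hp) => /eqP.
  by [].
move=> p; apply/implyP => pn; by rewrite /jn !mixcE (negbTE pn).
Qed.

Lemma jn_surj P (x : X) : @jn P (restr P x) (restr (~: P) x) = x.
Proof.
apply/ffunP => p; rewrite /jn mixcE; case: ifP => h; first exact: extc_restr.
by apply: extc_restr; rewrite in_setC h.
Qed.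

Lemma ptrace_jn P (rho : Op C X X) u v :
  ptrace (S := P) rho u v = \sum_w rho (@jn P u w) (@jn P v w).
Proof. exact: (ptrace_param (@jn_restr P) (@jn_agree P) (@jn_surj P)). Qed.

Lemma sum_jn P (F : X -> C) : \sum_x F x = \sum_u \sum_w F (@jn P u w).
Proof. exact: (sum_param (@jn_restr P) (@jn_agree P) (@jn_surj P)). Qed.

Section J3.
Variables (P1 P2 : {set Pos}).
Hypothesis dis : forall p, p \in P1 -> p \notin P2.
Let P3 := ~: (P1 :|: P2).

Definition j3 (u : CfgOn P1) (w : CfgOn P2 * CfgOn P3) : X :=
  mixc P1 (extc u) (mixc P2 (extc w.1) (extc w.2)).

Lemma j3_restr u w : restr P1 (j3 u w) = u.
Proof.
apply/ffunP => -[p hp]; rewrite restrE /j3 mixcE hp (extcE _ hp); by [].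
Qed.

Lemma j3_restr2 u w : restr P2 (j3 u w) = w.1.
Proof.
apply/ffunP => -[p hp]; rewrite restrE /j3 !mixcE /= hp.
case: ifP => h1; first by move: (dis h1); rewrite hp.
by rewrite (extcE _ hp).
Qed.

Lemma j3_restr3 u w : restr P3 (j3 u w) = w.2.
Proof.
apply/ffunP => -[p hp]; rewrite restrE /j3 !mixcE /=.
have /andP[h1 h2] : (p \notin P1) && (p \notin P2).
  by move: hp; rewrite /P3 in_setC in_setU negb_or.
by rewrite (negbTE h1) (negbTE h2) (extcE _ hp).
Qed.

Lemma j3_agree u w u' w' : agree P1 (j3 u w) (j3 u' w') = (w == w').
Proof.
apply/idP/eqP => [h|<-]; last first.
  apply/forallP => p; apply/implyP => pn; by rewrite /j3 !mixcE (negbTE pn).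
have e : forall p, p \notin P1 -> j3 u w p = j3 u' w' p.
  by move=> p pn; move/forallP: h => /(_ p) /implyP /(_ pn) /eqP.
clear h; case: w e => w2 w3; case: w' => w2' w3' e; congr (_, _).
  rewrite -[w2](j3_restr2 u (w2, w3)) -[w2'](j3_restr2 u' (w2', w3')).
  apply/ffunP => -[p hp]; rewrite !restrE; apply: e.
  by apply/negP => /dis; rewrite hp.
rewrite -[w3](j3_restr3 u (w2, w3)) -[w3'](j3_restr3 u' (w2', w3')).
apply/ffunP => -[p hp]; rewrite !restrE; apply: e.
by move: hp; rewrite /P3 in_setC in_setU negb_or => /andP[].
Qed.

Lemma j3_surj (x : X) : j3 (restr P1 x) (restr P2 x, restr P3 x) = x.
Proof.
apply/ffunP => p; rewrite /j3 !mixcE /=; case: ifP => h1; first exact: extc_restr.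
case: ifP => h2; first exact: extc_restr.
by apply: extc_restr; rewrite /P3 in_setC in_setU h1 h2.
Qed.

Lemma ptrace_j3 (rho : Op C X X) u v :
  ptrace (S := P1) rho u v = \sum_w rho (j3 u w) (j3 v w).
Proof. exact: (ptrace_param j3_restr j3_agree j3_surj). Qed.

Lemma sum_j3 (F : X -> C) : \sum_x F x = \sum_u \sum_w F (j3 u w).
Proof. exact: (sum_param j3_restr j3_agree j3_surj). Qed.

End J3.

End Cfg.


Section QL.
Variable C : numClosedFieldType.

Definition op0 (I J : finType) : Op C I J := fun _ _ => 0.

Lemma sum_seq (I J : finType) (ks : seq (Op C I J)) (F : Op C I J -> C) :
  \sum_(K <- ks) F K = \sum_(i < size ks) F (nth (@op0 I J) ks i).
Proof. by rewrite (big_nth (@op0 I J)) big_mkord. Qed.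

Lemma apply_ch_ext (I J : finType) (ks : seq (Op C I J)) (r r' : Op C I I) x y :
  (forall a b, r a b = r' a b) -> apply_ch ks r x y = apply_ch ks r' x y.
Proof.
move=> e; rewrite /apply_ch; apply: eq_bigr => K _; rewrite /mulop.
by apply: eq_bigr => b _; congr (_ * _); apply: eq_bigr => a _; rewrite e.
Qed.

Lemma sum_mul2 (I J : finType) (f : I -> C) (g : J -> C) :
  (\sum_i f i) * (\sum_j g j) = \sum_i \sum_j f i * g j.
Proof. by rewrite big_distrl; apply: eq_bigr => i _; rewrite big_distrr. Qed.

Lemma apply_ch_sum (I J T : finType) (ks : seq (Op C I J)) (z : C)
   (al : T -> I -> C) x y :
  apply_ch ks (fun a b => z * \sum_t al t a * (al t b)^*) x y =
  z * \sum_(K <- ks) \sum_t (\sum_a K x a * al t a) * (\sum_b K y b * al t b)^*.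
Proof.
rewrite /apply_ch big_distrr; apply: eq_bigr => K _; rewrite /mulop /adjop.
transitivity (z * \sum_t \sum_a \sum_b (K x a * al t a) * (K y b * al t b)^* ); last first.
  by congr (_ * _); apply: eq_bigr => t _; rewrite rmorph_sum sum_mul2.
rewrite big_distrr /=.
under eq_bigr => b _ do rewrite big_distrl /=.
under eq_bigr => b _ do under eq_bigr => a _ do rewrite mulrCA big_distrr big_distrr big_distrl /=.
rewrite exchange_big /=; under eq_bigr => a _ do rewrite exchange_big /=.
rewrite exchange_big /=; apply: eq_bigr => t _; rewrite big_distrr /=.
apply: eq_bigr => a _; rewrite big_distrr /=; apply: eq_bigr => b _.
rewrite rmorphM /=; ring.
Qed.

Lemma vec_density (I : finType) (v : I -> C) :
  \sum_i v i * (v i)^* != 0 ->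
  is_density (fun a b => (\sum_i v i * (v i)^*)^-1 * (v a * (v b)^*)).
Proof.
set N := \sum_i _ => N0.
have Nge : 0 <= N by apply: sumr_ge0 => i _; exact: mul_conjC_ge0.
have Nr : N^* = N by apply: conj_Creal; exact: ger0_real.
have Ni : (N^-1)^* = N^-1 by rewrite fmorphV /= Nr.
split.
- by move=> i j; rewrite !rmorphM /= Ni conjCK [v j * _]mulrC.
- move=> x.
  have -> : \sum_i \sum_j (x i)^* * (N^-1 * (v i * (v j)^*)) * x j =
      N^-1 * ((\sum_i (x i)^* * v i) * (\sum_j (x j)^* * v j)^*).
    rewrite rmorph_sum big_distrl big_distrr /=; apply: eq_bigr => i _.
    rewrite big_distrr big_distrr /=; apply: eq_bigr => j _.
    rewrite rmorphM /= conjCK; ring.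
  by apply: mulr_ge0; [rewrite invr_ge0 | exact: mul_conjC_ge0].
- by rewrite -big_distrr /= mulVf.
Qed.


Lemma sum_delta_r (T : finType) (t0 : T) (F : T -> C) :
  \sum_t F t * (t == t0)%:R = F t0.
Proof.
rewrite (bigD1 t0) //= eqxx mulr1 big1 ?addr0 // => t.
by move=> /negbTE ->; rewrite mulr0.
Qed.

Lemma sum_sq_eq0 (T : finType) (F : T -> C) :
  \sum_t F t * (F t)^* = 0 -> forall t, F t = 0.
Proof.
move=> /psumr_eq0P h t; apply/eqP; rewrite -mul_conjC_eq0; apply/eqP.
by apply: h => // t' _; exact: mul_conjC_ge0.
Qed.

Lemma ident_kraus (I T : finType) (a0 : I) (G : T -> I -> I -> C) :
  (forall (v : I -> C) c c',
     \sum_t (\sum_a G t c a * v a) * (\sum_b G t c' b * v b)^* = v c * (v c')^*) ->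
  forall t c a, G t c a = (c == a)%:R * G t a0 a0.
Proof.
move=> H.
have off : forall t c a, c != a -> G t c a = 0.
  move=> t c a ne; have := H (fun b => (b == a)%:R) c c.
  under eq_bigr => t' _ do rewrite !sum_delta_r.
  rewrite (negbTE ne) mul0r => /sum_sq_eq0; apply.
have diag : forall t a b, G t a a = G t b b.
  move=> t a b; case: (eqVneq a b) => [->//|ne].
  pose v := fun x => (x == a)%:R + (x == b)%:R : C.
  have Gv : forall t c, \sum_x G t c x * v x = G t c a + G t c b.
    move=> t' c; rewrite /v.
    under eq_bigr => x _ do rewrite mulrDr.
    by rewrite big_split /= !sum_delta_r.
  have e1 : forall t', G t' a a - G t' b b =
      (\sum_x G t' a x * v x) - (\sum_x G t' b x * v x).
    move=> t'; rewrite !Gv (off t' a b ne) (off t' b a) 1?eq_sym //.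
    by rewrite addr0 add0r.
  have e : \sum_t' (G t' a a - G t' b b) * (G t' a a - G t' b b)^* = 0.
    under eq_bigr => t' _ do rewrite e1 rmorphB /= mulrBl !mulrBr.
    rewrite !sumrB !H /v eqxx (negbTE ne) eq_sym (negbTE ne) /=.
    by rewrite eqxx !addr0 !add0r rmorph1 !subrr.
  by apply/eqP; rewrite -subr_eq0; apply/eqP; move: e => /sum_sq_eq0; apply.
move=> t c a; case: (eqVneq c a) => [->|ne]; first by rewrite mul1r (diag t a a0).
by rewrite (off t c a ne) mul0r.
Qed.

End QL.


Section KL.
Variables (q n : nat) (s : 'I_n -> nat) (d0 : 'I_q) (C : numClosedFieldType) (m : nat).
Local Notation Pos := (Pos s).
Local Notation X := (ShareCfg q s).
Local Notation Sc := (SecCfg q m).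
Local Notation CfgOn := (@CfgOn q n s).
Variable E : seq (Op C Sc X).
Definition KE (i : 'I_(size E)) : Op C Sc X := nth (@op0 C _ _) E i.
Definition a0 : Sc := [ffun _ => d0].

Lemma sum_unit (F : unit -> C) : \sum_(t : unit) F t = F tt.
Proof. by rewrite (bigD1 tt) //= big_pred0 ?addr0 // => -[]. Qed.

Lemma apply_ch_rank1 (I J : finType) (ks : seq (Op C I J)) (z : C) (v : I -> C) x y :
  apply_ch ks (fun a b => z * (v a * (v b)^*)) x y =
  z * \sum_(K <- ks) (\sum_a K x a * v a) * (\sum_b K y b * v b)^*.
Proof.
rewrite (@apply_ch_ext _ _ _ _ _ (fun a b => z * \sum_(t : unit) v a * (v b)^*)).
  by rewrite apply_ch_sum; congr (_ * _); apply: eq_bigr => K _; rewrite sum_unit.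
by move=> a b; rewrite sum_unit.
Qed.

Lemma KL (S : {set Pos}) : recoverable_from E S ->
  exists lam : 'I_(size E) * CfgOn (~: S) -> 'I_(size E) * CfgOn (~: S) -> C,
  forall i j w w' a b,
    \sum_u KE i (jn d0 u w) a * (KE j (jn d0 u w') b)^* = (a == b)%:R * lam (i, w) (j, w').
Proof.
move=> [Rc [chR recR]].
pose LR k := nth (@op0 C _ _) Rc k.
pose G (t : 'I_(size Rc) * ('I_(size E) * CfgOn (~: S))) (c a : Sc) :=
  \sum_u LR t.1 c u * KE t.2.1 (jn d0 u t.2.2) a.
have HG : forall v c c', \sum_t (\sum_a G t c a * v a) * (\sum_b G t c' b * v b)^* =
    v c * (v c')^*.
  move=> v c c'.
  pose be (t : 'I_(size E) * CfgOn (~: S)) u := \sum_a KE t.1 (jn d0 u t.2) a * v a.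
  have Gv : forall t c1, \sum_a G t c1 a * v a = \sum_u LR t.1 c1 u * be t.2 u.
    move=> t c1; rewrite /G; under eq_bigr => a _ do rewrite big_distrl /=.
    rewrite exchange_big; apply: eq_bigr => u _; rewrite big_distrr; apply: eq_bigr => a _ /=.
    by rewrite mulrA.
  case: (eqVneq (\sum_i v i * (v i)^*) 0) => [N0 | N0].
    have v0 : forall i, v i = 0 by apply: sum_sq_eq0.
    rewrite v0 mul0r; apply: big1 => t _.
    by rewrite big1 ?mul0r // => a _; rewrite v0 mulr0.
  have := recR _ (vec_density N0) c c'.
  set N := \sum_i _.
  rewrite (@apply_ch_ext _ _ _ _ _ (fun u u' => N^-1 * \sum_t be t u * (be t u')^*)); last first.
    move=> u u'; rewrite (ptrace_jn d0) /=.
    under eq_bigr => w _ do rewrite apply_ch_rank1 sum_seq.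
    rewrite -big_distrr /= sum_pair exchange_big /=; congr (_ * _).
  rewrite apply_ch_sum sum_seq => h.
  apply: (mulfI (invr_neq0 N0)); rewrite -h sum_pair; congr (_ * _).
  by apply: eq_bigr => k _; apply: eq_bigr => t _; rewrite !Gv.
have Gd := ident_kraus a0 HG.
pose g t := G t a0 a0.
exists (fun p p' => \sum_k g (k, p) * (g (k, p'))^*).
move=> i j w w' a b.
transitivity (\sum_k \sum_c G (k, (i, w)) c a * (G (k, (j, w')) c b)^*); last first.
  rewrite big_distrr; apply: eq_bigr => k _ /=.
  under eq_bigr => c _ do rewrite (Gd _ c a) (Gd _ c b) rmorphM rmorph_nat /=.
  rewrite (bigD1 a) //= big1 ?addr0; last first.
    by move=> c /negbTE ->; rewrite !mul0r.
  rewrite eqxx mul1r /g; ring.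
transitivity (\sum_u \sum_u' (u == u')%:R * (KE i (jn d0 u w) a * (KE j (jn d0 u' w') b)^*)).
  by apply: eq_bigr => u _; rewrite sum_delta.
have chR' : forall u u' : CfgOn S, (u == u')%:R =
    \sum_(k < size Rc) \sum_c (LR k c u')^* * LR k c u :> C.
  move=> u u'; have := chR u' u; rewrite /idop eq_sym => <-.
  by rewrite sum_seq; apply: eq_bigr => k _.
under eq_bigr => u _ do under eq_bigr => u' _ do rewrite chR' big_distrl /=.
under eq_bigr => u _ do rewrite exchange_big /=.
rewrite exchange_big /=; apply: eq_bigr => k _.
under eq_bigr => u _ do under eq_bigr => u' _ do rewrite big_distrl /=.
under eq_bigr => u _ do rewrite exchange_big /=.
rewrite exchange_big /=; apply: eq_bigr => c _.
rewrite /G /= rmorph_sum sum_mul2; apply: eq_bigr => u _; apply: eq_bigr => u' _.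
rewrite rmorphM /=; ring.
Qed.

End KL.


Section Quad.
Variable C : numClosedFieldType.

Lemma sum_delta_l (T : finType) (t0 : T) (F : T -> C) :
  \sum_t (t == t0)%:R * F t = F t0.
Proof. by under eq_bigr => t _ do rewrite eq_sym; rewrite sum_delta. Qed.

Lemma lin2 (I : finType) (a b : I) (c : C) (F : I -> C) :
  \sum_x ((x == a)%:R + c * (x == b)%:R) * F x = F a + c * F b.
Proof.
under eq_bigr => x _ do rewrite mulrDl -mulrA.
by rewrite big_split /= -big_distrr /= !sum_delta_l.
Qed.

Lemma quad (I : finType) (T : I -> I -> C) (a b : I) (c : C) :
  \sum_x \sum_y ((x == a)%:R + c * (x == b)%:R) *
       ((y == a)%:R + c * (y == b)%:R)^* * T x y =
  T a a + c^* * T a b + c * T b a + c * c^* * T b b.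
Proof.
under eq_bigr => x _ do under eq_bigr => y _ do rewrite -mulrA.
under eq_bigr => x _ do rewrite -big_distrr /=.
rewrite lin2.
under eq_bigr => y _ do rewrite rmorphD rmorphM !rmorph_nat /=.
rewrite lin2.
under eq_bigr => y _ do rewrite rmorphD rmorphM !rmorph_nat /=.
rewrite lin2; ring.
Qed.


Lemma normv (I : finType) (a b : I) (c : C) : a != b ->
  \sum_x ((x == a)%:R + c * (x == b)%:R) * ((x == a)%:R + c * (x == b)%:R)^* = 1 + c * c^*.
Proof.
move=> ne; rewrite lin2 eqxx (negbTE ne) eq_sym (negbTE ne).
by rewrite eqxx mulr0 addr0 rmorph1 add0r mulr1.
Qed.

Lemma norm_e (I : finType) (a : I) : \sum_x (x == a)%:R * ((x == a)%:R)^* = 1 :> C.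
Proof. by rewrite sum_delta_l eqxx rmorph_nat. Qed.

Lemma quad_e (I : finType) (T : I -> I -> C) (a : I) :
  \sum_x \sum_y (x == a)%:R * ((y == a)%:R)^* * T x y = T a a.
Proof.
under eq_bigr => x _ do under eq_bigr => y _ do rewrite rmorph_nat -mulrA.
under eq_bigr => x _ do rewrite -big_distrr /=.
by rewrite sum_delta_l sum_delta_l.
Qed.

End Quad.


Section Key.
Variables (q n : nat) (s : 'I_n -> nat) (d0 : 'I_q) (C : numClosedFieldType) (m : nat).
Local Notation Pos := (Pos s).
Local Notation X := (ShareCfg q s).
Local Notation Sc := (SecCfg q m).
Local Notation CfgOn := (@CfgOn q n s).
Variable E : seq (Op C Sc X).

Lemma swap5 (A B Y U I : finType) (F : A -> B -> Y -> U -> I -> C) :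
  \sum_a \sum_b \sum_y \sum_u \sum_i F a b y u i =
  \sum_y \sum_u \sum_i \sum_a \sum_b F a b y u i.
Proof.
transitivity (\sum_(p : A * B) \sum_(t : Y * (U * I)) F p.1 p.2 t.1 t.2.1 t.2.2).
  rewrite sum_pair; apply: eq_bigr => a _; apply: eq_bigr => b _.
  rewrite sum_pair; apply: eq_bigr => y _; by rewrite sum_pair.
rewrite exchange_big sum_pair; apply: eq_bigr => y _; rewrite sum_pair.
apply: eq_bigr => u _; apply: eq_bigr => i _; by rewrite sum_pair.
Qed.

Section Fix.
Variables (Z : {set 'I_n}) (S : {set Pos}).
Let P1 := posOf s Z.
Let P2 := S :\: P1.
Lemma dis12 : forall p, p \in P1 -> p \notin P2.
Proof. by move=> p h; rewrite in_setD h. Qed.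
Let P3 := ~: (P1 :|: P2).

Definition psi (a : Sc) (u : CfgOn P1) (y : CfgOn P2) (e : CfgOn P3 * 'I_(size E)) :=
  KE e.2 (j3 d0 u (y, e.1)) a.

Definition Tm a b u v := \sum_y \sum_e psi a u y e * (psi b v y e)^*.

Lemma lin_ptrace (z : C) (vv : Sc -> C) u u' :
  ptrace (S := P1) (apply_ch E (fun a b => z * (vv a * (vv b)^*))) u u' =
  z * \sum_a \sum_b vv a * (vv b)^* * Tm a b u u'.
Proof.
rewrite (ptrace_j3 d0 dis12).
under eq_bigr => w _ do rewrite apply_ch_rank1 sum_seq.
rewrite -big_distrr /=; congr (_ * _).
transitivity (\sum_a \sum_b \sum_y \sum_u3 \sum_i
   vv a * (vv b)^* * (psi a u y (u3, i) * (psi b u' y (u3, i))^* )); last first.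
  apply: eq_bigr => a _; apply: eq_bigr => b _; rewrite /Tm big_distrr /=.
  apply: eq_bigr => y _; rewrite big_distrr sum_pair /=.
  by apply: eq_bigr => u3 _; apply: eq_bigr => i _.
rewrite swap5 sum_pair; apply: eq_bigr => y _; apply: eq_bigr => u3 _.
apply: eq_bigr => i _; rewrite rmorph_sum sum_mul2; apply: eq_bigr => a _.
apply: eq_bigr => b _; rewrite /psi /KE /= rmorphM /=; ring.
Qed.


Let b0 : Sc := [ffun _ => d0].

Lemma H1 : unauthorized E Z ->
  forall a b u v, Tm a b u v = (a == b)%:R * Tm b0 b0 u v.
Proof.
move=> hq.
have Qv : forall (vv : Sc -> C) u v, \sum_i vv i * (vv i)^* != 0 ->
    \sum_a \sum_b vv a * (vv b)^* * Tm a b u v = (\sum_i vv i * (vv i)^* ) * Tm b0 b0 u v.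
  move=> vv u v N0.
  have Ne := norm_e C b0.
  have N1 : \sum_x (x == b0)%:R * ((x == b0)%:R)^* != 0 :> C by rewrite Ne oner_eq0.
  have := hq _ _ (vec_density N0) (vec_density N1) u v.
  rewrite !lin_ptrace Ne invr1 mul1r quad_e => <-.
  by rewrite mulrA mulfV // mul1r.
have diag : forall a u v, Tm a a u v = Tm b0 b0 u v.
  move=> a u v; have N1 : \sum_x (x == a)%:R * ((x == a)%:R)^* != 0 :> C.
    by rewrite norm_e oner_eq0.
  by have := Qv _ u v N1; rewrite quad_e norm_e mul1r.
move=> a b u v; case: (eqVneq a b) => [<-|ne]; first by rewrite mul1r diag.
rewrite mul0r.
have off : forall c : C, 1 + c * c^* != 0 -> c^* * Tm a b u v + c * Tm b a u v = 0.
  move=> c nz; have := Qv (fun x => (x == a)%:R + c * (x == b)%:R) u v.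
  rewrite normv // => /(_ nz); rewrite quad !diag => h.
  set T0 := Tm b0 b0 u v in h *; set Tab := Tm a b u v; set Tba := Tm b a u v.
  have -> : c^* * Tab + c * Tba =
    (T0 + c^* * Tab + c * Tba + c * c^* * T0) - (1 + c * c^*) * T0 by ring.
  by rewrite h subrr.
have e1 : Tm a b u v + Tm b a u v = 0.
  have := off 1; rewrite rmorph1 !mul1r; apply.
  by rewrite -mulr2n pnatr_eq0.
have e2 : - 'i * Tm a b u v + 'i * Tm b a u v = 0.
  have := off 'i; rewrite conjCi; apply.
  by rewrite mulrN -expr2 sqrCi opprK -mulr2n pnatr_eq0.
have h3 : (- (2%:R * 'i)) * Tm a b u v = 0.
  have -> : (- (2%:R * 'i)) * Tm a b u v =
     (- 'i * Tm a b u v + 'i * Tm b a u v) - 'i * (Tm a b u v + Tm b a u v) by ring.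
  by rewrite e2 e1 mulr0 subr0.
move/eqP: h3; rewrite mulf_eq0 oppr_eq0 mulf_eq0 pnatr_eq0 /= (negbTE (neq0Ci C)) /=.
by move/eqP.
Qed.


Lemma S3 : forall p, p \in S -> p \notin P3.
Proof.
move=> p hp; rewrite /P3 in_setC in_setU negbK.
by case h1: (p \in P1) => //=; rewrite /P2 in_setD h1 hp.
Qed.

Lemma restr3_jn (sv : CfgOn S) w :
  restr P3 (jn d0 sv w) = restr P3 (extc d0 w).
Proof.
apply/ffunP => -[p hp]; rewrite !restrE /jn mixcE.
by case: ifP => // h; move: (S3 h); rewrite hp.
Qed.

Lemma mix_jn (u3' : CfgOn P3) (sv : CfgOn S) w :
  mixc P3 (extc d0 u3') (jn d0 sv w) =
  jn d0 sv (restr (~: S) (mixc P3 (extc d0 u3') (extc d0 w))).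
Proof.
apply/ffunP => p; rewrite /jn !mixcE.
case hS: (p \in S).
  by rewrite (negbTE (S3 hS)).
rewrite (@extc_restr _ _ _ d0 (~: S)); first by rewrite mixcE.
by rewrite in_setC hS.
Qed.

Lemma mix_j3 u y (u3 u3' : CfgOn P3) :
  mixc P3 (extc d0 u3') (j3 d0 u (y, u3)) = j3 d0 u (y, u3').
Proof.
apply/ffunP => p; rewrite /j3 !mixcE /=.
by case h1: (p \in P1); case h2: (p \in P2); rewrite /P3 in_setC in_setU h1 h2 /=.
Qed.

Lemma H2 : recoverable_from E S ->
  exists lam, forall a b e f,
    \sum_u \sum_y psi a u y e * (psi b u y f)^* = (a == b)%:R * lam e f.
Proof.
move/(KL d0) => [lS hS].
pose w2 (u3' : CfgOn P3) (w : CfgOn (~: S)) :=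
  restr (~: S) (mixc P3 (extc d0 u3') (extc d0 w)).
exists (fun e f => \sum_w (if restr P3 (extc d0 w) == e.1
                           then lS (e.2, w) (f.2, w2 f.1 w) else 0)).
move=> a b [u3 i] [u3' j] /=; rewrite /psi /=.
transitivity (\sum_x (if restr P3 x == u3
    then KE i x a * (KE j (mixc P3 (extc d0 u3') x) b)^* else 0)).
  rewrite (sum_j3 d0 dis12); apply: eq_bigr => u _; rewrite sum_pair.
  apply: eq_bigr => y _; rewrite (bigD1 u3) //= j3_restr3 eqxx [X in _ + X]big1 ?addr0.
    by rewrite mix_j3.
  by move=> u3'' ne; rewrite j3_restr3 /= (negbTE ne).
rewrite (sum_jn d0 S) exchange_big big_distrr; apply: eq_bigr => w _ /=.
under eq_bigr => sv _ do rewrite restr3_jn mix_jn.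
case: (restr P3 (extc d0 w) == u3); last by rewrite mulr0 big1.
exact: hS.
Qed.


Lemma key_bound : (1 < q)%N -> is_channel E -> unauthorized E Z ->
  recoverable_from E S -> (m <= #|S :\: posOf s Z|)%N.
Proof.
move=> q2 chE hu hr.
have [lam hl] := H2 hr.
have h1 := H1 hu.
have H0 : exists a u y e, psi a u y e != 0.
  have := chE b0 b0; rewrite /idop eqxx sum_seq /= => h.
  case: (pickP (fun ix : 'I_(size E) * X => KE ix.1 ix.2 b0 != 0)) => [[i x] /= nz | all0].
    exists b0, (restr P1 x), (restr P2 x), (restr P3 x, i).
    by rewrite /psi /= j3_surj.
  exfalso; move: h; rewrite big1 => [|i _].
    by move/eqP; rewrite eq_sym oner_eq0.
  rewrite /mulop big1 // => x _; have := all0 (i, x); rewrite /= /KE => /negbFE /eqP ->.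
  by rewrite mulr0.
have := abstract_bound (w := fun u v => Tm b0 b0 u v) h1 hl H0.
rewrite !card_ffun !card_ord card_sig leq_exp2l //.
Qed.

End Fix.
End Key.

Unset Implicit Arguments.

Theorem corollary3 (R : realType) (q m n t d z : nat) (s : 'I_n -> nat)
    (E : seq (Op R[i] (SecCfg q m) (ShareCfg q s)))
    (H : {set 'I_n} -> {set Pos s}) :
  (2 <= q)%N -> (z < t)%N -> (t <= d)%N -> (d <= n)%N ->
  is_QSS t z E ->
  (forall A : {set 'I_n}, #|A| = d ->
     H A \subset posOf s A /\ recoverable_from E (H A)) ->
  ((d * m)%:R / (d - z)%:R : rat)
    <= ((\max_(A : {set 'I_n} | #|A| == d) #|H A|)%N)%:R.
Proof.
move=> q2 zt td dn [chE _ unE] hH.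
have q0 : (0 < q)%N by apply: ltnW.
pose d0 : 'I_q := Ordinal q0.
pose A0 : {set 'I_n} := [set widen_ord dn i | i : 'I_d].
have cA0 : #|A0| = d by rewrite card_imset ?card_ord //; by move=> i j /(congr1 val) /= /val_inj.
have [sub rec] := hH A0 cA0.
have zA : (z < #|A0|)%N by rewrite cA0; lia.
have avg := average sub zA (fun Zs _ hZ =>
   key_bound d0 q2 chE (unE Zs (eq_leq hZ)) rec).
rewrite cA0 in avg.
have hM : (#|H A0| <= \max_(A : {set 'I_n} | #|A| == d) #|H A|)%N.
  by apply: (@leq_bigmax_cond _ (fun A : {set 'I_n} => #|A| == d) (fun A => #|H A|) A0); rewrite cA0.
have dz : (0 < d - z)%N by lia.
rewrite ler_pdivrMr ?ltr0n // -natrM ler_nat.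
apply: leq_trans avg _; rewrite mulnC leq_mul2r hM orbT //.
Qed.
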